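(* Let $\ell>0$. For any initial datum $S(0)\in\mathbb R_+$ there exists a unique positive solution $S(t)\in\mathbb R_+$ of the ODE $\frac{d}{dt}S(t)=A_\ell(S(t))$. This solution is bounded with continuous first derivative for all $t\ge0$; moreover $\lim_{t\to\infty}S(t)=1$ and $0\le S(t)\le\max\{S(0),1\}$ for all $t\ge0$.
   Context: $\mathbb R_+=\{x\in\mathbb R:x\ge0\}$. With $\Phi$ the standard normal cdf: for $x>0$, $D_\ell(x)=2\ell^2e^{\ell^2(x-1)}\Phi\big(\tfrac{\ell(1-2x)}{\sqrt{2x}}\big)$, $\Gamma_\ell(x)=D_\ell(x)+2\ell^2\Phi\big(-\tfrac{\ell}{\sqrt{2x}}\big)$, $A_\ell(x)=-2xD_\ell(x)+\Gamma_\ell(x)$; and $D_\ell(0)=\Gamma_\ell(0)=A_\ell(0)=2\ell^2e^{-\ell^2}$. *)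

(* Defs.v *)
From Stdlib Require Import Reals Lra.
From Coquelicot Require Import Coquelicot.
Open Scope R_scope.

Definition Phi (x : R) : R :=
  RInt_gen (fun u => exp (- u ^ 2 / 2) / sqrt (2 * PI))
           (Rbar_locally m_infty) (at_point x).

Definition D_ (l x : R) : R :=
  if Rle_dec x 0 then 2 * l ^ 2 * exp (- l ^ 2)
  else 2 * l ^ 2 * exp (l ^ 2 * (x - 1)) * Phi (l * (1 - 2 * x) / sqrt (2 * x)).

Definition Gamma_ (l x : R) : R :=
  if Rle_dec x 0 then 2 * l ^ 2 * exp (- l ^ 2)
  else D_ l x + 2 * l ^ 2 * Phi (- l / sqrt (2 * x)).

Definition A_ (l x : R) : R :=
  if Rle_dec x 0 then 2 * l ^ 2 * exp (- l ^ 2)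
  else - 2 * x * D_ l x + Gamma_ l x.

Definition is_solution (l S0 : R) (S : R -> R) : Prop :=
  S 0 = S0 /\
  (forall t, 0 <= t -> 0 <= S t) /\
  (forall t, 0 < t -> is_derive S t (A_ l (S t))) /\
  filterlim (fun h => (S h - S 0) / h) (at_right 0) (locally (A_ l (S 0))).

(* Main.v *)
Require Import Defs.
From Stdlib Require Import Reals Lra Lia Psatz ClassicalEpsilon.
From Coquelicot Require Import Coquelicot.
Open Scope R_scope.

Ltac toR := match goal with |- @eq _ ?a ?b => change (@eq R a b) end.

Definition gs (s : R) := exp (- (s ^ 2)).
Definition EE (z : R) := RInt gs 0 z.
Definition gk (z t : R) := exp (- (z ^ 2 * (1 + t ^ 2))) / (1 + t ^ 2).
Definition gg (z : R) := RInt (gk z) 0 1.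

Lemma gs_cont s : continuous gs s.
Proof. apply (ex_derive_continuous (K:=R_AbsRing) (V:=R_NormedModule)); unfold gs; auto_derive; auto. Qed.

Lemma ex_RInt_gs a b : ex_RInt gs a b.
Proof. apply (ex_RInt_continuous (V:=R_CompleteNormedModule)); intros; apply gs_cont. Qed.

Lemma EE_deriv (z : R) : is_derive EE z (gs z).
Proof.
  apply is_derive_RInt with (a := 0).
  - apply filter_forall; intros b; apply RInt_correct, ex_RInt_gs.
  - apply gs_cont.
Qed.

Lemma one_plus_sq_pos t : 0 < 1 + t ^ 2.
Proof. nra. Qed.

Lemma gk_cont z t : continuous (gk z) t.
Proof.
  apply (ex_derive_continuous (K:=R_AbsRing) (V:=R_NormedModule)); unfold gk; auto_derive.
  pose proof (one_plus_sq_pos t); lra.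
Qed.

Lemma gk_Derive u v : Derive (fun z => gk z v) u = - 2 * u * exp (- (u ^ 2 * (1 + v ^ 2))).
Proof.
  apply is_derive_unique; unfold gk.
  pose proof (one_plus_sq_pos v).
  auto_derive; [lra|]. replace (u * (u * 1) * (1 + v * (v * 1))) with (u ^ 2 * (1 + v ^ 2)) by ring. field; lra.
Qed.

Lemma gg_deriv (z : R) : is_derive gg z (RInt (fun t => - 2 * z * exp (- (z ^ 2 * (1 + t ^ 2)))) 0 1).
Proof.
  unfold gg.
  assert (H : is_derive (fun x0 => RInt (fun t => gk x0 t) 0 1) z
     (RInt (fun t => Derive (fun u => gk u t) z) 0 1)).
  { apply is_derive_RInt_param.
    - apply filter_forall; intros x0 t _; unfold gk; auto_derive.
      pose proof (one_plus_sq_pos t); lra.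
    - intros t _.
      apply continuity_2d_pt_ext with (f := fun u v => - 2 * u * exp (- (u ^ 2 * (1 + v ^ 2)))).
      { intros; rewrite gk_Derive; reflexivity. }
      apply continuity_2d_pt_mult.
      + apply continuity_2d_pt_mult; [apply continuity_2d_pt_const|apply continuity_2d_pt_id1].
      + apply continuity_1d_2d_pt_comp with (f := exp) (g := fun u v => - (u ^ 2 * (1 + v ^ 2))).
        * apply derivable_continuous_pt, derivable_pt_exp.
        * apply continuity_2d_pt_opp.
          apply continuity_2d_pt_mult.
          -- simpl. apply continuity_2d_pt_mult; [apply continuity_2d_pt_id1|].
             apply continuity_2d_pt_mult; [apply continuity_2d_pt_id1|apply continuity_2d_pt_const].
          -- apply continuity_2d_pt_plus; [apply continuity_2d_pt_const|].
             simpl. apply continuity_2d_pt_mult; [apply continuity_2d_pt_id2|].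
             apply continuity_2d_pt_mult; [apply continuity_2d_pt_id2|apply continuity_2d_pt_const].
    - apply filter_forall; intros y. apply (ex_RInt_continuous (V:=R_CompleteNormedModule)); intros; apply gk_cont. }
  erewrite RInt_ext in H. exact H.
  intros x _; simpl. rewrite gk_Derive. reflexivity.
Qed.

Lemma gg_deriv' (z : R) : is_derive gg z (- 2 * gs z * EE z).
Proof.
  eapply is_derive_ext; [intros; reflexivity|].
  replace (- 2 * gs z * EE z) with (RInt (fun t => - 2 * z * exp (- (z ^ 2 * (1 + t ^ 2)))) 0 1).
  apply gg_deriv.
  apply is_RInt_unique.
  apply (is_RInt_ext (fun t => scal (-2 * gs z) (scal z (gs (z * t + 0))))).
  { intros x _. unfold scal; simpl; unfold mult; simpl. unfold gs.
      replace (- (z * (z * 1) * (1 + x * (x * 1)))) with (- z ^ 2 + - (z * x + 0) ^ 2) by ring.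
      rewrite exp_plus. ring. }
  replace (- 2 * gs z * EE z) with (scal (-2 * gs z) (EE z)).
  2:{ unfold scal; simpl; unfold mult; simpl. ring. }
  apply (@is_RInt_scal R_NormedModule). apply (is_RInt_comp_lin gs z 0 0 1).
  replace (z * 0 + 0) with 0 by ring. replace (z * 1 + 0) with z by ring.
  exact (RInt_correct (V:=R_CompleteNormedModule) _ _ _ (ex_RInt_gs 0 z)).
Qed.

Definition hh z := EE z ^ 2 + gg z.

Lemma hh_deriv (z : R) : is_derive hh z 0.
Proof.
  unfold hh.
  eapply is_derive_ext; [intros; reflexivity|].
  replace 0 with (INR 2 * gs z * EE z ^ Init.Nat.pred 2 + (- 2 * gs z * EE z)).
  apply (is_derive_plus (fun z => EE z ^ 2)).
  apply (is_derive_pow EE 2). apply EE_deriv. apply gg_deriv'.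
  simpl; ring.
Qed.

Lemma atan_deriv (x : R) : is_derive atan x (/ (1 + x ^ 2)).
Proof. apply is_derive_Reals, derivable_pt_lim_atan. Qed.

Lemma hh_0 : hh 0 = PI / 4.
Proof.
  unfold hh, EE, gg. rewrite RInt_point. unfold zero; simpl.
  rewrite (RInt_ext _ (fun t => / (1 + t ^ 2))).
  2:{ intros x _. unfold gk. replace (- (0 ^ 2 * (1 + x ^ 2))) with 0 by ring.
      unfold Rdiv; rewrite exp_0, Rmult_1_l; reflexivity. }
  rewrite (is_RInt_unique _ _ _ (minus (atan 1) (atan 0))).
  unfold minus, plus, opp; simpl. rewrite atan_1, atan_0. ring.
  apply (is_RInt_derive atan).
  intros; apply atan_deriv.
  intros x _. apply (ex_derive_continuous (K:=R_AbsRing) (V:=R_NormedModule)).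
  auto_derive. pose proof (one_plus_sq_pos x); lra.
Qed.

Lemma hh_const z : hh z = PI / 4.
Proof.
  rewrite <- hh_0.
  destruct (MVT_gen hh 0 z (fun _ => 0)) as [c [_ Hc]].
  - intros; apply hh_deriv.
  - intros x _. apply continuity_pt_filterlim.
    apply (ex_derive_continuous (K:=R_AbsRing) (V:=R_NormedModule)).
    eexists; apply hh_deriv.
  - lra.
Qed.

Lemma gg_bounds z : 0 <= gg z <= exp (- z ^ 2).
Proof.
  unfold gg. split.
  - apply RInt_ge_0. lra. apply (ex_RInt_continuous (V:=R_CompleteNormedModule)); intros; apply gk_cont.
    intros x _. unfold gk. pose proof (one_plus_sq_pos x). pose proof (exp_pos (- (z ^ 2 * (1 + x ^ 2)))).
    apply Rlt_le, Rdiv_lt_0_compat; lra.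
  - replace (exp (- z ^ 2)) with (RInt (fun _ => exp (- z ^ 2)) 0 1).
    2:{ rewrite RInt_const. unfold scal; simpl; unfold mult; simpl. ring. }
    apply RInt_le. lra.
    apply (ex_RInt_continuous (V:=R_CompleteNormedModule)); intros; apply gk_cont.
    apply ex_RInt_const.
    intros x Hx. unfold gk. pose proof (one_plus_sq_pos x).
    assert (exp (- (z ^ 2 * (1 + x ^ 2))) <= exp (- z ^ 2)).
    { apply exp_le_3 || idtac. destruct (Req_dec (- (z ^ 2 * (1 + x ^ 2))) (- z ^ 2)) as [e|n].
      rewrite e; lra. left; apply exp_increasing. nra. }
    apply Rle_trans with (exp (- (z ^ 2 * (1 + x ^ 2))) / 1).
    apply Rmult_le_compat_l. left; apply exp_pos. apply Rinv_le_contravar; nra.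
    lra.
Qed.


Lemma RInt_swapR (f : R -> R) a b : ex_RInt f a b -> RInt f b a = - RInt f a b.
Proof. intros H. rewrite <- (opp_RInt_swap (V:=R_CompleteNormedModule) f a b H). reflexivity. Qed.

Lemma sqrtPI_pos : 0 < sqrt PI.
Proof. apply sqrt_lt_R0, PI_RGT_0. Qed.

Lemma EE_nonneg z : 0 <= z -> 0 <= EE z.
Proof.
  intros Hz. unfold EE. apply RInt_ge_0; auto. apply ex_RInt_gs.
  intros; unfold gs; left; apply exp_pos.
Qed.

Lemma EE_bound z : 0 <= z -> Rabs (EE z - sqrt PI / 2) * (sqrt PI / 2) <= exp (- z ^ 2).
Proof.
  intros Hz. pose proof (hh_const z) as H. unfold hh in H.
  pose proof (gg_bounds z) as [G1 G2].
  pose proof (EE_nonneg z Hz) as E0.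
  pose proof sqrtPI_pos as Sp.
  assert (Hc : (sqrt PI / 2) ^ 2 = PI / 4).
  { replace ((sqrt PI / 2) ^ 2) with ((sqrt PI * sqrt PI) / 4) by field.
    rewrite sqrt_sqrt. reflexivity. left; apply PI_RGT_0. }
  set (e := EE z) in *. set (c := sqrt PI / 2) in *.
  assert (Hcp : 0 < c) by (unfold c; lra).
  apply Rle_trans with (Rabs (e - c) * (e + c)).
  { apply Rmult_le_compat_l. apply Rabs_pos. lra. }
  replace (Rabs (e - c) * (e + c)) with (Rabs ((e - c) * (e + c))).
  2:{ rewrite Rabs_mult. rewrite (Rabs_right (e + c)); lra. }
  replace ((e - c) * (e + c)) with (- gg z) by nra.
  rewrite Rabs_Ropp, Rabs_right; lra.
Qed.

Definition phi (u : R) := exp (- u ^ 2 / 2) / sqrt (2 * PI).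

Lemma phi_cont u : continuous phi u.
Proof.
  apply (ex_derive_continuous (K:=R_AbsRing) (V:=R_NormedModule)).
  unfold phi; auto_derive. pose proof (sqrt_lt_R0 (2*PI)). pose proof PI_RGT_0. lra.
Qed.

Lemma ex_RInt_phi a b : ex_RInt phi a b.
Proof. apply (ex_RInt_continuous (V:=R_CompleteNormedModule)); intros; apply phi_cont. Qed.

Lemma sqrt2PI : sqrt (2 * PI) = sqrt 2 * sqrt PI.
Proof. apply sqrt_mult; lra || (left; apply PI_RGT_0). Qed.

Lemma phi_int w : RInt phi 0 w = EE (w / sqrt 2) / sqrt PI.
Proof.
  pose proof sqrtPI_pos as Sp. assert (S2 : 0 < sqrt 2) by (apply sqrt_lt_R0; lra).
  apply is_RInt_unique.
  apply (is_RInt_ext (fun y => scal (/ sqrt 2) ((fun s => gs s / sqrt PI) (/ sqrt 2 * y + 0)))).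
  { intros x _. unfold scal; simpl; unfold mult; simpl; toR. unfold phi, gs. rewrite sqrt2PI.
    replace (- (/ sqrt 2 * x + 0) ^ 2) with (- x ^ 2 / 2).
    field; lra.
    replace (- x ^ 2 / 2) with (- (x ^ 2 / (sqrt 2 * sqrt 2))).
    field; lra. rewrite sqrt_sqrt; lra. }
  assert (H : is_RInt (fun s => gs s / sqrt PI) (/ sqrt 2 * 0 + 0) (/ sqrt 2 * w + 0) (EE (w / sqrt 2) / sqrt PI)).
  { replace (/ sqrt 2 * 0 + 0) with 0 by ring.
    replace (/ sqrt 2 * w + 0) with (w / sqrt 2) by (field; lra).
    replace (EE (w / sqrt 2) / sqrt PI) with (scal (/ sqrt PI) (EE (w / sqrt 2))).
    2:{ unfold scal; simpl; unfold mult; simpl; toR. field; lra. }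
    apply (is_RInt_ext (fun s => scal (/ sqrt PI) (gs s))).
    { intros; unfold scal; simpl; unfold mult; simpl; toR. field; lra. }
    apply (@is_RInt_scal R_NormedModule).
    exact (RInt_correct (V:=R_CompleteNormedModule) _ _ _ (ex_RInt_gs 0 _)). }
  exact (is_RInt_comp_lin (V:=R_NormedModule) _ (/ sqrt 2) 0 0 w _ H).
Qed.

Lemma EE_odd z : EE (- z) = - EE z.
Proof.
  unfold EE. apply is_RInt_unique.
  apply (is_RInt_ext (fun y => opp (scal (-1) (gs (-1 * y + 0))))).
  { intros; unfold opp, scal; simpl; unfold mult; simpl; toR. unfold gs.
    replace (-1 * x + 0) with (- x) by ring. replace ((- x) ^ 2) with (x ^ 2) by ring. ring. }
  assert (H : is_RInt gs (-1 * 0 + 0) (-1 * - z + 0) (RInt gs 0 z)).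
  { replace (-1 * 0 + 0) with 0 by ring. replace (-1 * - z + 0) with z by ring.
    exact (RInt_correct (V:=R_CompleteNormedModule) _ _ _ (ex_RInt_gs _ _)). }
  exact (is_RInt_opp _ _ _ _ (is_RInt_comp_lin (V:=R_NormedModule) _ (-1) 0 0 (-z) _ H)).
Qed.

Lemma tail_phi : forall eps, 0 < eps -> exists c0, forall c, c < c0 -> Rabs (RInt phi c 0 - 1 / 2) < eps.
Proof.
  intros eps He.
  pose proof sqrtPI_pos as Sp. assert (S2 : 0 < sqrt 2) by (apply sqrt_lt_R0; lra).
  exists (- sqrt 2 * (1 + / eps)). intros c Hc.
  rewrite RInt_swapR by apply ex_RInt_phi. rewrite phi_int.
  set (z := - c / sqrt 2).
  assert (Hz : 1 + / eps < z).
  { unfold z. apply Rmult_lt_reg_l with (sqrt 2); auto.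
    replace (sqrt 2 * (- c / sqrt 2)) with (- c) by (field; lra). lra. }
  assert (Hie : 0 < / eps) by (apply Rinv_0_lt_compat; lra).
  assert (Ez : - (EE (c / sqrt 2) / sqrt PI) = EE z / sqrt PI).
  { unfold z. replace (- c / sqrt 2) with (- (c / sqrt 2)) by (field; lra). rewrite EE_odd. field; lra. }
  rewrite Ez.
  pose proof (EE_bound z ltac:(lra)) as B.
  assert (Hexp : exp (- z ^ 2) < eps).
  { assert (1 + z ^ 2 <= exp (z ^ 2)) by apply exp_ineq1_le.
    rewrite exp_Ropp. apply Rle_lt_trans with (/ (1 + z ^ 2)).
    apply Rinv_le_contravar; nra.
    apply Rmult_lt_reg_l with (1 + z ^ 2). nra. rewrite Rinv_r by nra.
    assert (z * eps > 1). { apply Rmult_lt_reg_r with (/ eps); auto.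
      rewrite Rmult_assoc, Rinv_r by lra. lra. }
    nra. }
  assert (PI > 3) by (pose proof PI2_3_2; lra).
  assert (SS : sqrt PI * sqrt PI = PI) by (apply sqrt_sqrt; lra).
  replace (EE z / sqrt PI - 1 / 2) with ((EE z - sqrt PI / 2) / sqrt PI) by (field; lra).
  rewrite Rabs_div by lra. rewrite (Rabs_right (sqrt PI)) by lra.
  assert (sqrt PI > 1).
  { rewrite <- sqrt_1. apply sqrt_lt_1; lra. }
  apply Rmult_lt_reg_r with (sqrt PI / 2 * sqrt PI). nra.
  replace (Rabs (EE z - sqrt PI / 2) / sqrt PI * (sqrt PI / 2 * sqrt PI)) with
    (Rabs (EE z - sqrt PI / 2) * (sqrt PI / 2)) by (field; lra).
  assert (sqrt PI / 2 * sqrt PI > 1) by nra.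
  nra.
Qed.


Lemma Phi_eq x : Phi x = 1 / 2 + RInt phi 0 x.
Proof.
  unfold Phi. change (fun u => exp (- u ^ 2 / 2) / sqrt (2 * PI)) with phi.
  apply (is_RInt_gen_unique (V:=R_CompleteNormedModule) (Fa:=Rbar_locally m_infty) (Fb:=at_point x)).
  replace (1 / 2 + RInt phi 0 x) with (plus (1 / 2) (RInt phi 0 x)) by reflexivity.
    apply (is_RInt_gen_Chasles (V:=R_NormedModule) (Fa:=Rbar_locally m_infty) (Fc:=at_point x) phi 0).
    + unfold is_RInt_gen, filterlimi, filter_le, filtermapi.
      intros P [eps HP].
      destruct (tail_phi eps (cond_pos eps)) as [c0 Hc].
      apply Filter_prod with (fun a => a < c0) (fun b => b = 0).
      * exists c0; auto.
      * reflexivity.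
      * intros a b Ha Hb; subst b; simpl.
        exists (RInt phi a 0); split.
        exact (RInt_correct (V:=R_CompleteNormedModule) _ _ _ (ex_RInt_phi _ _)).
        apply HP. unfold ball; simpl; unfold AbsRing_ball, abs, minus, plus, opp; simpl.
        apply Hc; auto.
    + apply is_RInt_gen_at_point.
      exact (RInt_correct (V:=R_CompleteNormedModule) _ _ _ (ex_RInt_phi _ _)).
Qed.

Lemma Phi_deriv (x : R) : is_derive Phi x (phi x).
Proof.
  apply (is_derive_ext (fun x => 1 / 2 + RInt phi 0 x)).
  { intros; rewrite Phi_eq; reflexivity. }
  replace (phi x) with (0 + phi x) by ring.
  apply (is_derive_plus (fun _ => 1 / 2) (fun x => RInt phi 0 x)).
  auto_derive; auto; ring.
  apply is_derive_RInt with (a := 0).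
  apply filter_forall; intros b.
  exact (RInt_correct (V:=R_CompleteNormedModule) _ _ _ (ex_RInt_phi _ _)).
  apply phi_cont.
Qed.

Lemma Phi_cont x : continuity_pt Phi x.
Proof.
  apply continuity_pt_filterlim.
  apply (ex_derive_continuous (K:=R_AbsRing) (V:=R_NormedModule)).
  eexists; apply Phi_deriv.
Qed.

Lemma Phi_sym y : Phi (- y) = 1 - Phi y.
Proof.
  rewrite !Phi_eq, !phi_int.
  replace (- y / sqrt 2) with (- (y / sqrt 2)) by (field; apply Rgt_not_eq, sqrt_lt_R0; lra).
  rewrite EE_odd. field. apply Rgt_not_eq, sqrtPI_pos.
Qed.

Lemma phi_pos u : 0 < phi u.
Proof.
  unfold phi. apply Rdiv_lt_0_compat. apply exp_pos.
  apply sqrt_lt_R0. pose proof PI_RGT_0; lra.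
Qed.

Lemma Phi_split c y : Phi y = RInt phi c y + (1 / 2 - RInt phi c 0).
Proof.
  rewrite Phi_eq.
  rewrite <- (RInt_Chasles (V:=R_CompleteNormedModule) phi c 0 y) by apply ex_RInt_phi.
  unfold plus; simpl. ring.
Qed.

Lemma Phi_pos y : 0 < Phi y.
Proof.
  set (m := RInt phi (y - 1) y).
  assert (Hm : 0 < m).
  { apply RInt_gt_0. lra. intros; apply phi_pos. intros; apply phi_cont. }
  destruct (tail_phi (m / 2) ltac:(lra)) as [c0 Hc].
  set (c := Rmin (c0 - 1) (y - 2)).
  assert (c < c0) by (unfold c; pose proof (Rmin_l (c0 - 1) (y - 2)); lra).
  assert (c <= y - 1) by (unfold c; pose proof (Rmin_r (c0 - 1) (y - 2)); lra).
  rewrite (Phi_split c y).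
  specialize (Hc c H). apply Rabs_def2 in Hc.
  rewrite <- (RInt_Chasles (V:=R_CompleteNormedModule) phi c (y - 1) y) by apply ex_RInt_phi.
  unfold plus; simpl. fold m.
  assert (0 <= RInt phi c (y - 1)).
  { apply RInt_ge_0; auto. apply ex_RInt_phi. intros; left; apply phi_pos. }
  lra.
Qed.

Lemma Phi_lt1 y : Phi y < 1.
Proof. pose proof (Phi_pos (- y)). rewrite Phi_sym in H. lra. Qed.

Lemma phi_deriv (u : R) : is_derive phi u (- u * phi u).
Proof.
  unfold phi. auto_derive.
  pose proof (sqrt_lt_R0 (2 * PI)). pose proof PI_RGT_0. lra.
  replace (- (u * (u * 1)) * / 2) with (- u ^ 2 / 2) by field. field. apply Rgt_not_eq, sqrt_lt_R0. pose proof PI_RGT_0. lra.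
Qed.

Lemma mills_up y : y < 0 -> Phi y <= phi y / (- y).
Proof.
  intros Hy.
  apply Rnot_lt_le; intros Hlt.
  set (eps := Phi y - phi y / (- y)).
  destruct (tail_phi eps ltac:(unfold eps; lra)) as [c0 Hc].
  set (c := Rmin (c0 - 1) (y - 1)).
  assert (c < c0) by (unfold c; pose proof (Rmin_l (c0 - 1) (y - 1)); lra).
  assert (c < y) by (unfold c; pose proof (Rmin_r (c0 - 1) (y - 1)); lra).
  specialize (Hc c H). apply Rabs_def2 in Hc.
  assert (HI : is_RInt (fun u => u / y * phi u) c y (minus (- phi y / y) (- phi c / y))).
  { apply (is_RInt_derive (fun u => - phi u / y)).
    - intros x _. auto_derive.
      + eexists; apply phi_deriv.
      + match goal with |- context [Derive ?f x] => replace (Derive f x) with (- x * phi x) by (symmetry; apply is_derive_unique; apply phi_deriv) end. field. lra.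
    - intros x _. apply (ex_derive_continuous (K:=R_AbsRing) (V:=R_NormedModule)).
      auto_derive. eexists; apply phi_deriv. }
  assert (Hle : RInt phi c y <= minus (- phi y / y) (- phi c / y)).
  { rewrite <- (is_RInt_unique _ _ _ _ HI).
    apply RInt_le. lra. apply ex_RInt_phi. eexists; exact HI.
    intros x Hx. pose proof (phi_pos x).
    assert (x / y >= 1). { apply Rle_ge. apply Rmult_le_reg_r with (- y). lra.
      replace (x / y * - y) with (- x) by (field; lra). lra. }
    assert (0 <= (x / y - 1) * phi x) by (apply Rmult_le_pos; lra).
    lra. }
  unfold minus, plus, opp in Hle; simpl in Hle.
  assert (Hb : - (- phi c / y) <= 0).
  { replace (- (- phi c / y)) with (phi c / y) by (field; lra).
    apply Rmult_le_reg_r with (- y). lra. replace (phi c / y * - y) with (- phi c) by (field; lra).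
    pose proof (phi_pos c); lra. }
  assert (Ha : - phi y / y = phi y / - y) by (field; lra).
  pose proof (Phi_split c y) as Hs.
  destruct Hc as [_ Hc].
  unfold eps in Hc.
  clear -Hle Hb Ha Hs Hc.
  set (A := phi y / - y) in *. set (B := - (- phi c / y)) in *.
  rewrite Ha in Hle. set (r := RInt phi c y) in *. set (q := RInt phi c 0) in *.
  lra.
Qed.

Lemma Derive_phi y : Derive (fun x => phi x) y = - y * phi y.
Proof. apply is_derive_unique; apply phi_deriv. Qed.
Lemma Derive_Phi y : Derive (fun x => Phi x) y = phi y.
Proof. apply is_derive_unique; apply Phi_deriv. Qed.
Ltac rwD := repeat first [rewrite Derive_phi | rewrite Derive_Phi].
Lemma ex_derive_phi y : ex_derive (fun x => phi x) y.
Proof. eexists; apply phi_deriv. Qed.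
Lemma ex_derive_Phi y : ex_derive (fun x => Phi x) y.
Proof. eexists; apply Phi_deriv. Qed.
Ltac exD := repeat match goal with
  | |- _ /\ _ => split
  | |- True => exact I
  | |- ex_derive (fun x => phi x) ?y => exact (ex_derive_phi y)
  | |- ex_derive (fun x => Phi x) ?y => exact (ex_derive_Phi y)
  end.

Lemma incr_of_deriv (f df : R -> R) a b : a < b ->
  (forall x, a <= x <= b -> is_derive f x (df x)) -> (forall x, a <= x <= b -> 0 < df x) -> f a < f b.
Proof.
  intros Hab Hd Hp.
  destruct (MVT_gen f a b df) as [c [Hc E]].
  - intros x Hx. apply Hd. rewrite Rmin_left, Rmax_right in Hx; lra.
  - intros x Hx. rewrite Rmin_left, Rmax_right in Hx by lra.
    apply continuity_pt_filterlim.
    apply (ex_derive_continuous (K:=R_AbsRing) (V:=R_NormedModule)).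
    eexists; apply Hd; auto.
  - rewrite Rmin_left, Rmax_right in Hc by lra.
    specialize (Hp c Hc). nra.
Qed.

Lemma nondecr_of_deriv (f df : R -> R) a b : a <= b ->
  (forall x, a <= x <= b -> is_derive f x (df x)) -> (forall x, a <= x <= b -> 0 < df x) -> f a <= f b.
Proof.
  intros Hab Hd Hp. destruct (Req_dec a b) as [->|n]. lra.
  left; apply (incr_of_deriv f df); auto. lra.
Qed.

Definition NN y := phi y + y * Phi y.
Definition MM y := Phi y * (1 + y ^ 2) + y * phi y.

Lemma NN_deriv (y : R) : is_derive NN y (Phi y).
Proof. unfold NN. auto_derive; exD. rwD. ring. Qed.

Lemma MM_deriv (y : R) : is_derive MM y (2 * NN y).
Proof. unfold MM, NN. auto_derive; exD. rwD. ring. Qed.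

Lemma NN_nonneg y : 0 <= NN y.
Proof.
  unfold NN. pose proof (phi_pos y). pose proof (Phi_pos y).
  destruct (Rlt_or_le y 0) as [Hy|Hy].
  - pose proof (mills_up y Hy).
    assert (- y * Phi y <= phi y).
    { apply Rle_trans with (- y * (phi y / - y)). apply Rmult_le_compat_l; lra.
      right; field; lra. }
    lra.
  - nra.
Qed.

Lemma NN_pos y : 0 < NN y.
Proof.
  pose proof (NN_nonneg (y - 1)).
  assert (NN (y - 1) < NN y).
  { apply (incr_of_deriv NN Phi). lra. intros; apply NN_deriv. intros; apply Phi_pos. }
  lra.
Qed.

Lemma MM_pos y : 0 < MM y.
Proof.
  destruct (Rle_or_lt 0 y) as [Hy|Hy].
  { unfold MM. pose proof (phi_pos y). pose proof (Phi_pos y). nra. }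
  apply Rnot_le_lt; intros Hle.
  set (y1 := y - 1).
  assert (H1 : MM y1 < MM y).
  { apply (incr_of_deriv MM (fun y => 2 * NN y)). unfold y1; lra.
    intros; apply MM_deriv. intros; pose proof (NN_pos x); lra. }
  set (d := - MM y1).
  assert (Hd : 0 < d) by (unfold d; lra).
  set (z := Rmin y1 (- (2 / d) - 1)).
  assert (Hz1 : z <= y1) by (unfold z; apply Rmin_l).
  assert (Hz2 : z <= - (2 / d) - 1) by (unfold z; apply Rmin_r).
  assert (H2 : MM z <= MM y1).
  { apply (nondecr_of_deriv MM (fun y => 2 * NN y)). auto.
    intros; apply MM_deriv. intros; pose proof (NN_pos x); lra. }
  assert (H3 : z * phi z <= MM z).
  { unfold MM. pose proof (Phi_pos z). nra. }
  assert (Hz0 : z < 0) by (unfold y1 in Hz1; lra).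
  assert (H2d : 0 < 2 / d) by (apply Rdiv_lt_0_compat; lra).
  assert (H4 : - d < z * phi z).
  { assert (Hphi : phi z <= / (1 + z ^ 2 / 2)).
    { unfold phi.
      assert (Hs : 1 <= sqrt (2 * PI)).
      { rewrite <- sqrt_1. apply sqrt_le_1_alt. pose proof PI2_3_2. lra. }
      assert (He : 1 + z ^ 2 / 2 <= exp (z ^ 2 / 2)) by apply exp_ineq1_le.
      replace (- z ^ 2 / 2) with (- (z ^ 2 / 2)) by field. rewrite exp_Ropp.
      apply Rle_trans with (/ exp (z ^ 2 / 2)).
      { unfold Rdiv. rewrite <- (Rmult_1_r (/ exp (z ^ 2 / 2))) at 2.
        apply Rmult_le_compat_l. left; apply Rinv_0_lt_compat, exp_pos.
        rewrite <- Rinv_1. apply Rinv_le_contravar; lra. }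
      apply Rinv_le_contravar; nra. }
    assert (Hd2 : d * (- z) > 2).
    { assert (- z >= 2 / d + 1) by lra.
      assert (d * (2 / d) = 2) by (field; lra). nra. }
    assert (Hq : - z * / (1 + z ^ 2 / 2) < d).
    { apply Rmult_lt_reg_r with (1 + z ^ 2 / 2). nra.
      rewrite Rmult_assoc, Rinv_l by nra. nra. }
    pose proof (phi_pos z).
    assert (- z * phi z <= - z * / (1 + z ^ 2 / 2)) by (apply Rmult_le_compat_l; lra).
    lra. }
  unfold d in H4. lra.
Qed.

Section F.
Variable l : R.
Hypothesis hl : 0 < l.

Definition Fx (x : R) := 2 * l ^ 2 * ((1 - 2 * x) * exp (l ^ 2 * (x - 1)) * Phi (l * (1 - 2 * x) / sqrt (2 * x))
   + Phi (- l / sqrt (2 * x))).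

Lemma A_pos_eq x : 0 < x -> A_ l x = Fx x.
Proof.
  intros Hx. unfold A_, Gamma_, D_, Fx.
  destruct (Rle_dec x 0); [lra|]. ring.
Qed.

Lemma A_neg_eq x : x <= 0 -> A_ l x = 2 * l ^ 2 * exp (- l ^ 2).
Proof. intros Hx. unfold A_. destruct (Rle_dec x 0); [reflexivity|lra]. Qed.

Definition dF (x : R) := 2 * l ^ 2 * exp (l ^ 2 * (x - 1)) * Phi (l * (1 - 2 * x) / sqrt (2 * x)) * (l ^ 2 - 2 - 2 * x * l ^ 2)
  + 2 * l ^ 3 * sqrt (2 * x) * phi (- l / sqrt (2 * x)).

Lemma phi_a_eq x : 0 < x -> phi (l * (1 - 2 * x) / sqrt (2 * x)) = phi (- l / sqrt (2 * x)) * / exp (l ^ 2 * (x - 1)).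
Proof.
  intros Hx. unfold phi.
  assert (Hs : 0 < sqrt (2 * x)) by (apply sqrt_lt_R0; lra).
  assert (Hss : sqrt (2 * x) * sqrt (2 * x) = 2 * x) by (apply sqrt_sqrt; lra).
  assert (key : - (- l / sqrt (2 * x)) ^ 2 / 2 = - (l * (1 - 2 * x) / sqrt (2 * x)) ^ 2 / 2 + l ^ 2 * (x - 1)).
  { set (s := sqrt (2 * x)) in *. clearbody s.
    assert (x = s * s / 2) by lra. subst x. field. lra. }
  rewrite key, exp_plus. field.
  split. apply Rgt_not_eq, exp_pos. apply Rgt_not_eq, sqrt_lt_R0. pose proof PI_RGT_0; lra.
Qed.

Lemma Fx_deriv x : 0 < x -> is_derive Fx x (dF x).
Proof.
  intros Hx. unfold Fx.
  assert (Hs : 0 < sqrt (2 * x)) by (apply sqrt_lt_R0; lra).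
  assert (Hss : sqrt (2 * x) * sqrt (2 * x) = 2 * x) by (apply sqrt_sqrt; lra).
  auto_derive.
  { exD; lra. }
  rwD. unfold dF.
  change (l * (1 + - (2 * x)) * / sqrt (2 * x)) with (l * (1 - 2 * x) / sqrt (2 * x)).
  change (- l * / sqrt (2 * x)) with (- l / sqrt (2 * x)).
  rewrite (phi_a_eq x Hx).
  replace (exp (l * (l * 1) * (x + - (1)))) with (exp (l ^ 2 * (x - 1))) by (f_equal; ring).
  set (E := exp (l ^ 2 * (x - 1))).
  assert (HE : 0 < E) by apply exp_pos.
  set (Pa := Phi (l * (1 - 2 * x) / sqrt (2 * x))).
  set (pb := phi (- l / sqrt (2 * x))).
  set (s := sqrt (2 * x)) in *. clearbody s E Pa pb.
  assert (x = s * s / 2) by lra. subst x.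
  field. lra.
Qed.


Lemma A_deriv x : 0 < x -> is_derive (A_ l) x (dF x).
Proof.
  intros Hx. apply is_derive_ext_loc with Fx.
  - exists (mkposreal x Hx). intros t Ht. simpl in Ht.
    unfold ball in Ht; simpl in Ht; unfold AbsRing_ball, abs, minus, plus, opp in Ht; simpl in Ht.
    apply Rabs_def2 in Ht. symmetry. apply A_pos_eq. lra.
  - apply Fx_deriv; auto.
Qed.

Definition Kf (b0 c : R) := c * Phi (b0 * c) * exp (b0 ^ 2 * c ^ 2 / 2).

Lemma K_deriv b0 (c : R) : is_derive (Kf b0) c (exp (b0 ^ 2 * c ^ 2 / 2) * MM (b0 * c)).
Proof.
  unfold Kf. auto_derive; exD. rwD. unfold MM.
  replace (b0 * (b0 * 1) * (c * (c * 1)) * / 2) with (b0 ^ 2 * c ^ 2 / 2) by field.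
  field.
Qed.

Lemma Fx_K x : 0 < x -> Fx x = 2 * l ^ 2 * exp (- (- l / sqrt (2 * x)) ^ 2 / 2) *
   (Kf (- l / sqrt (2 * x)) 1 - Kf (- l / sqrt (2 * x)) (2 * x - 1)).
Proof.
  intros Hx. unfold Fx, Kf.
  assert (Hs : 0 < sqrt (2 * x)) by (apply sqrt_lt_R0; lra).
  assert (Hss : sqrt (2 * x) * sqrt (2 * x) = 2 * x) by (apply sqrt_sqrt; lra).
  set (b0 := - l / sqrt (2 * x)).
  assert (E1 : b0 * (2 * x - 1) = l * (1 - 2 * x) / sqrt (2 * x)) by (unfold b0; field; lra).
  assert (E2 : b0 ^ 2 * (2 * x - 1) ^ 2 / 2 = l ^ 2 * (x - 1) + b0 ^ 2 / 2).
  { unfold b0. set (s := sqrt (2 * x)) in *. clearbody s.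
    assert (x = s * s / 2) by lra. subst x. field. lra. }
  rewrite E1, E2, exp_plus. rewrite Rmult_1_r.
  replace (b0 ^ 2 * 1 ^ 2 / 2) with (b0 ^ 2 / 2) by field.
  replace (- b0 ^ 2 / 2) with (- (b0 ^ 2 / 2)) by field. rewrite exp_Ropp.
  assert (0 < exp (b0 ^ 2 / 2)) by apply exp_pos.
  field. lra.
Qed.

Lemma K_incr b0 c1 c2 : c1 < c2 -> Kf b0 c1 < Kf b0 c2.
Proof.
  intros H. apply (incr_of_deriv (Kf b0) (fun c => exp (b0 ^ 2 * c ^ 2 / 2) * MM (b0 * c))); auto.
  intros; apply K_deriv.
  intros; apply Rmult_lt_0_compat. apply exp_pos. apply MM_pos.
Qed.

Lemma A_pos_lt1 x : x < 1 -> 0 < A_ l x.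
Proof.
  intros H. destruct (Rle_or_lt x 0) as [H0|H0].
  - rewrite A_neg_eq by auto. pose proof (exp_pos (- l ^ 2)). pose proof (pow_lt l 2 hl).
    apply Rmult_lt_0_compat; lra.
  - rewrite A_pos_eq, Fx_K by auto.
    pose proof (K_incr (- l / sqrt (2 * x)) (2 * x - 1) 1 ltac:(lra)).
    pose proof (exp_pos (- (- l / sqrt (2 * x)) ^ 2 / 2)).
    pose proof (pow_lt l 2 hl).
    apply Rmult_lt_0_compat. apply Rmult_lt_0_compat. lra. auto. lra.
Qed.

Lemma A_neg_gt1 x : 1 < x -> A_ l x < 0.
Proof.
  intros H. rewrite A_pos_eq, Fx_K by lra.
  pose proof (K_incr (- l / sqrt (2 * x)) 1 (2 * x - 1) ltac:(lra)).
  pose proof (exp_pos (- (- l / sqrt (2 * x)) ^ 2 / 2)).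
  pose proof (pow_lt l 2 hl).
  assert (0 < 2 * l ^ 2 * exp (- (- l / sqrt (2 * x)) ^ 2 / 2)) by (apply Rmult_lt_0_compat; lra).
  nra.
Qed.

Lemma A_one : A_ l 1 = 0.
Proof. rewrite A_pos_eq, Fx_K by lra. replace (2 * 1 - 1) with 1 by ring. ring. Qed.

End F.

Lemma exp_le x y : x <= y -> exp x <= exp y.
Proof. intros H. destruct (Req_dec x y) as [->|n]. lra. left; apply exp_increasing; lra. Qed.

Lemma phi_le1 u : phi u <= 1.
Proof.
  unfold phi.
  assert (Hs : 1 <= sqrt (2 * PI)).
  { rewrite <- sqrt_1. apply sqrt_le_1_alt. pose proof PI2_3_2. lra. }
  assert (exp (- u ^ 2 / 2) <= 1).
  { rewrite <- exp_0. apply exp_le. pose proof (pow2_ge_0 u). lra. }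
  apply Rle_trans with (exp (- u ^ 2 / 2) / 1).
  unfold Rdiv. apply Rmult_le_compat_l. left; apply exp_pos. rewrite <- Rinv_1.
  apply Rinv_le_contravar; lra. lra.
Qed.

Lemma dF_bound l : 0 < l -> forall K, 0 < K -> exists C, 0 < C /\ forall c, 0 <= c <= K -> Rabs (dF l c) <= C.
Proof.
  intros hl K HK.
  pose proof (pow_lt l 2 hl) as l2.
  pose proof (pow_lt l 3 hl) as l3.
  set (C1 := 2 * l ^ 2 * exp (l ^ 2 * (K - 1)) * (l ^ 2 + 2 + 2 * K * l ^ 2)).
  set (C2 := 2 * l ^ 3 * sqrt (2 * K)).
  exists (C1 + C2 + 1). split.
  { assert (0 <= C1). { unfold C1. pose proof (exp_pos (l ^ 2 * (K - 1))).
      apply Rmult_le_pos. apply Rmult_le_pos; lra. nra. }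
    assert (0 <= C2). { unfold C2. pose proof (sqrt_pos (2 * K)). apply Rmult_le_pos; lra. }
    lra. }
  intros c Hc. unfold dF.
  set (Pa := Phi (l * (1 - 2 * c) / sqrt (2 * c))).
  set (pb := phi (- l / sqrt (2 * c))).
  assert (HPa : 0 < Pa < 1) by (split; [apply Phi_pos|apply Phi_lt1]).
  assert (Hpb : 0 < pb <= 1) by (split; [apply phi_pos|apply phi_le1]).
  assert (HE : 0 < exp (l ^ 2 * (c - 1)) <= exp (l ^ 2 * (K - 1))).
  { split. apply exp_pos. apply exp_le. apply Rmult_le_compat_l; lra. }
  assert (Hsq : 0 <= sqrt (2 * c) <= sqrt (2 * K)).
  { split. apply sqrt_pos. apply sqrt_le_1_alt. lra. }
  assert (Hq : Rabs (l ^ 2 - 2 - 2 * c * l ^ 2) <= l ^ 2 + 2 + 2 * K * l ^ 2).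
  { apply Rabs_le. nra. }
  eapply Rle_trans. apply Rabs_triang.
  assert (Rabs (2 * l ^ 2 * exp (l ^ 2 * (c - 1)) * Pa * (l ^ 2 - 2 - 2 * c * l ^ 2)) <= C1).
  { rewrite Rabs_mult. unfold C1.
    rewrite (Rabs_right (2 * l ^ 2 * exp (l ^ 2 * (c - 1)) * Pa)).
    2:{ apply Rle_ge. apply Rmult_le_pos; [apply Rmult_le_pos|]; lra. }
    apply Rmult_le_compat. apply Rmult_le_pos; [apply Rmult_le_pos|]; lra. apply Rabs_pos.
    apply Rle_trans with (2 * l ^ 2 * exp (l ^ 2 * (K - 1)) * 1).
    apply Rmult_le_compat; try lra. apply Rmult_le_pos; lra.
    apply Rmult_le_compat_l; lra. lra. auto. }
  assert (Rabs (2 * l ^ 3 * sqrt (2 * c) * pb) <= C2).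
  { rewrite Rabs_right. unfold C2.
    apply Rle_trans with (2 * l ^ 3 * sqrt (2 * K) * 1).
    apply Rmult_le_compat; try lra. apply Rmult_le_pos; lra.
    apply Rmult_le_compat_l; lra. lra.
    apply Rle_ge. apply Rmult_le_pos; [apply Rmult_le_pos|]; lra. }
  lra.
Qed.

Lemma A_max0 l x : A_ l x = A_ l (Rmax x 0).
Proof.
  unfold Rmax. destruct (Rle_dec x 0). rewrite !A_neg_eq by lra. reflexivity. reflexivity.
Qed.

Definition gfun l x := (1 - 2 * x) * exp (l ^ 2 * (x - 1)).
Lemma g_cont l : continuity_pt (gfun l) 0.
Proof.
  apply continuity_pt_filterlim.
  apply (ex_derive_continuous (K:=R_AbsRing) (V:=R_NormedModule)). unfold gfun. auto_derive. auto.
Qed.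

Lemma A_near0 l : 0 < l -> forall x, 0 < x < 1 / 4 ->
  Rabs (A_ l x - A_ l 0) <= 6 * l * sqrt (2 * x) +
     2 * l ^ 2 * Rabs (gfun l x - gfun l 0).
Proof.
  intros hl x Hx.
  pose proof (pow_lt l 2 hl) as l2.
  rewrite A_pos_eq by lra. rewrite A_neg_eq by lra. unfold Fx.
  replace (exp (- l ^ 2)) with (gfun l 0).
  2:{ unfold gfun. replace (l ^ 2 * (0 - 1)) with (- l ^ 2) by ring. ring. }
  replace ((1 - 2 * x) * exp (l ^ 2 * (x - 1))) with (gfun l x) by reflexivity.
  assert (Hg : 0 < gfun l x <= 1).
  { unfold gfun. split. apply Rmult_lt_0_compat. lra. apply exp_pos.
    assert (exp (l ^ 2 * (x - 1)) <= 1). { apply Rle_trans with (exp 0); [|rewrite exp_0; lra]. apply exp_le. assert (0 <= l ^ 2 * (1 - x)) by (apply Rmult_le_pos; lra). lra. }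
    pose proof (exp_pos (l ^ 2 * (x - 1))). nra. }
  set (s := sqrt (2 * x)).
  assert (Hs : 0 < s) by (apply sqrt_lt_R0; lra).
  set (a := l * (1 - 2 * x) / s). set (b := - l / s).
  assert (Ha : 0 < a) by (unfold a; apply Rdiv_lt_0_compat; nra).
  assert (Hb : 0 < - b) by (unfold b; replace (- (- l / s)) with (l / s) by (field; lra); apply Rdiv_lt_0_compat; lra).
  assert (HPa : 1 - Phi a <= s / (l * (1 - 2 * x))).
  { rewrite <- Phi_sym. eapply Rle_trans. apply mills_up. lra.
    rewrite Ropp_involutive. pose proof (phi_le1 (- a)).
    replace (s / (l * (1 - 2 * x))) with (1 / a) by (unfold a; field; split; lra).
    unfold Rdiv. apply Rmult_le_compat_r. left; apply Rinv_0_lt_compat; lra. lra. }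
  assert (HPb : Phi b <= s / l).
  { eapply Rle_trans. apply mills_up. lra. pose proof (phi_le1 b).
    replace (s / l) with (1 / - b) by (unfold b; field; split; lra).
    unfold Rdiv. apply Rmult_le_compat_r. left; apply Rinv_0_lt_compat; lra. lra. }
  assert (HPa2 : s / (l * (1 - 2 * x)) <= 2 * s / l).
  { apply Rmult_le_reg_r with (l * (1 - 2 * x)). nra.
    replace (s / (l * (1 - 2 * x)) * (l * (1 - 2 * x))) with s by (field; split; lra).
    replace (2 * s / l * (l * (1 - 2 * x))) with (2 * s * (1 - 2 * x)) by (field; lra). nra. }
  pose proof (Phi_pos a). pose proof (Phi_lt1 a). pose proof (Phi_pos b).
  set (Pa := Phi a) in *. set (Pb := Phi b) in *. set (G := gfun l x) in *. set (G0 := gfun l 0) in *.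
  replace (2 * l ^ 2 * (G * Pa + Pb) - 2 * l ^ 2 * G0) with (2 * l ^ 2 * (G * (Pa - 1) + (G - G0) + Pb)) by ring.
  rewrite Rabs_mult. rewrite (Rabs_right (2 * l ^ 2)) by lra.
  assert (Rabs (G * (Pa - 1) + (G - G0) + Pb) <= 3 * s / l + Rabs (G - G0)).
  { eapply Rle_trans. apply Rabs_triang. eapply Rle_trans. apply Rplus_le_compat_r. apply Rabs_triang.
    rewrite (Rabs_right Pb) by lra. rewrite Rabs_mult, (Rabs_right G) by lra.
    rewrite Rabs_minus_sym, (Rabs_right (1 - Pa)) by lra.
    assert (G * (1 - Pa) <= 1 - Pa) by nra. lra. }
  apply Rle_trans with (2 * l ^ 2 * (3 * s / l + Rabs (G - G0))).
  apply Rmult_le_compat_l; lra.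
  right. field. lra.
Qed.

Lemma A_cont l : 0 < l -> forall x, continuity_pt (A_ l) x.
Proof.
  intros hl x.
  pose proof (pow_lt l 2 hl) as l2.
  destruct (Rtotal_order x 0) as [Hn|[H0|Hp]].
  - apply continuity_pt_filterlim.
    apply continuous_ext_loc with (fun _ => 2 * l ^ 2 * exp (- l ^ 2)).
    + exists (mkposreal (- x) ltac:(lra)). intros t Ht. simpl in Ht.
      unfold ball in Ht; simpl in Ht; unfold AbsRing_ball, abs, minus, plus, opp in Ht; simpl in Ht.
      apply Rabs_def2 in Ht. rewrite A_neg_eq by lra. reflexivity.
    + apply continuous_const.
  - subst x. unfold continuity_pt, continue_in, limit1_in, limit_in. intros eps He. simpl.
    pose proof (g_cont l) as Hg.
    unfold continuity_pt, continue_in, limit1_in, limit_in in Hg.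
    destruct (Hg (eps / (4 * l ^ 2))) as [alp [Halp Hg2]].
    { apply Rdiv_lt_0_compat; lra. }
    set (d1 := (eps / (12 * l)) ^ 2 / 2).
    assert (Hd1 : 0 < d1) by (unfold d1; assert (0 < eps / (12 * l)) by (apply Rdiv_lt_0_compat; lra); nra).
    exists (Rmin (Rmin alp d1) (1 / 4)). split.
    { apply Rmin_pos; [apply Rmin_pos|]; lra. }
    intros x [_ Hx]. simpl in Hx. unfold R_dist in *.
    pose proof (Rmin_l (Rmin alp d1) (1 / 4)). pose proof (Rmin_r (Rmin alp d1) (1 / 4)).
    pose proof (Rmin_l alp d1). pose proof (Rmin_r alp d1).
    rewrite Rminus_0_r in Hx. apply Rabs_def2 in Hx.
    destruct (Rle_or_lt x 0) as [Hx0|Hx0].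
    + rewrite (A_neg_eq l x Hx0), (A_neg_eq l 0) by lra. unfold Rminus. rewrite Rplus_opp_r, Rabs_R0. lra.
    + eapply Rle_lt_trans. apply A_near0; auto. lra.
      assert (Hgx : Rabs (gfun l x - gfun l 0) < eps / (4 * l ^ 2)).
      { apply Hg2. split. unfold D_x, no_cond; split; auto. lra. simpl. unfold R_dist.
        rewrite Rminus_0_r, Rabs_right; lra. }
      assert (Hsq : sqrt (2 * x) < eps / (12 * l)).
      { rewrite <- (sqrt_pow2 (eps / (12 * l))). apply sqrt_lt_1_alt. unfold d1 in *. lra.
        left; apply Rdiv_lt_0_compat; lra. }
      assert (6 * l * sqrt (2 * x) < eps / 2).
      { apply Rlt_le_trans with (6 * l * (eps / (12 * l))). apply Rmult_lt_compat_l. lra. lra.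
        right; field; lra. }
      assert (2 * l ^ 2 * Rabs (gfun l x - gfun l 0) < eps / 2).
      { apply Rlt_le_trans with (2 * l ^ 2 * (eps / (4 * l ^ 2))). apply Rmult_lt_compat_l. lra. auto.
        right; field; lra. }
      lra.
  - apply continuity_pt_filterlim.
    apply (ex_derive_continuous (K:=R_AbsRing) (V:=R_NormedModule)).
    eexists. apply A_deriv; auto.
Qed.

Lemma A_lip l : 0 < l -> forall K, 0 < K -> exists L, 0 < L /\
  forall x y, x <= K -> y <= K -> Rabs (A_ l x - A_ l y) <= L * Rabs (x - y).
Proof.
  intros hl K HK.
  destruct (dF_bound l hl K HK) as [C [HC Hb]].
  exists C. split; auto.
  assert (Hmain : forall x y, 0 <= x <= K -> 0 <= y <= K -> x <= y -> Rabs (A_ l x - A_ l y) <= C * Rabs (x - y)).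
  { intros x y Hx Hy Hxy.
    destruct (Req_dec x y) as [->|n].
    { unfold Rminus; rewrite !Rplus_opp_r, Rabs_R0. lra. }
    destruct (MVT_gen (A_ l) x y (dF l)) as [c [Hc E]].
    - intros t Ht. rewrite Rmin_left, Rmax_right in Ht by lra. apply A_deriv; lra.
    - intros t _. apply A_cont; auto.
    - rewrite Rmin_left, Rmax_right in Hc by lra.
      rewrite Rabs_minus_sym, E, Rabs_mult, (Rabs_minus_sym x y).
      apply Rmult_le_compat_r. apply Rabs_pos. apply Hb; lra. }
  intros x y Hx Hy.
  rewrite (A_max0 l x), (A_max0 l y).
  assert (Rabs (Rmax x 0 - Rmax y 0) <= Rabs (x - y)).
  { unfold Rmax; destruct (Rle_dec x 0), (Rle_dec y 0); unfold Rabs; repeat destruct Rcase_abs; lra. }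
  assert (Hx' : 0 <= Rmax x 0 <= K) by (split; [apply Rmax_r|apply Rmax_lub; lra]).
  assert (Hy' : 0 <= Rmax y 0 <= K) by (split; [apply Rmax_r|apply Rmax_lub; lra]).
  eapply Rle_trans; [|apply Rmult_le_compat_l; [lra|exact H]].
  destruct (Rle_or_lt (Rmax x 0) (Rmax y 0)).
  - apply Hmain; auto.
  - rewrite Rabs_minus_sym, (Rabs_minus_sym (Rmax x 0)). apply Hmain; auto; lra.
Qed.

From Stdlib Require Import Ranalysis5.

Section Gen.
Variable G : R -> R.
Variables y0 L : R.
Hypothesis Gc : forall z, continuity_pt G z.
Hypothesis Gp : forall z, z < 1 -> 0 < G z.
Hypothesis HL : 0 < L.
Hypothesis Hy0 : y0 < 1.
Hypothesis GL : forall z, y0 <= z <= 1 -> G z <= L * (1 - z).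

Definition iG (z : R) := / G z.
Definition HH (y : R) := RInt iG y0 y.

Lemma iG_cont z : z < 1 -> continuous iG z.
Proof.
  intros Hz. apply continuity_pt_filterlim. unfold iG.
  apply (continuity_pt_inv G z (Gc z)). pose proof (Gp z Hz); lra.
Qed.

Lemma ex_RInt_iG u v : u < 1 -> v < 1 -> ex_RInt iG u v.
Proof.
  intros Hu Hv. apply (ex_RInt_continuous (V:=R_CompleteNormedModule)).
  intros z Hz. apply iG_cont.
  apply Rle_lt_trans with (Rmax u v). lra. apply Rmax_lub_lt; auto.
Qed.

Lemma HH_deriv (y : R) : y < 1 -> is_derive HH y (iG y).
Proof.
  intros Hy. apply is_derive_RInt with (a := y0).
  - exists (mkposreal (1 - y) ltac:(lra)). intros b Hb. simpl in Hb.
    unfold ball in Hb; simpl in Hb; unfold AbsRing_ball, abs, minus, plus, opp in Hb; simpl in Hb.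
    apply Rabs_def2 in Hb.
    exact (RInt_correct (V:=R_CompleteNormedModule) _ _ _ (ex_RInt_iG y0 b Hy0 ltac:(lra))).
  - apply iG_cont; auto.
Qed.

Lemma HH_cont y : y < 1 -> continuity_pt HH y.
Proof.
  intros Hy. apply continuity_pt_filterlim.
  apply (ex_derive_continuous (K:=R_AbsRing) (V:=R_NormedModule)).
  eexists; apply HH_deriv; auto.
Qed.

Definition a0 := y0 - 1.

Lemma Mx_ex : exists M, 0 < M /\ forall z, a0 <= z <= 1 -> G z <= M.
Proof.
  destruct (continuity_ab_maj G a0 1) as [Mx [H1 H2]].
  unfold a0; lra. intros; apply Gc.
  exists (G Mx). split.
  - pose proof (H1 a0 ltac:(unfold a0; lra)). pose proof (Gp a0 ltac:(unfold a0; lra)). lra.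
  - auto.
Qed.

Lemma HH_diff u v : u < v -> v < 1 -> HH v - HH u = RInt iG u v.
Proof.
  intros Huv Hv. unfold HH.
  rewrite <- (RInt_Chasles (V:=R_CompleteNormedModule) iG y0 u v).
  unfold plus; simpl. ring.
  apply ex_RInt_iG; lra. apply ex_RInt_iG; lra.
Qed.

Lemma HH_lower M : (forall z, a0 <= z <= 1 -> G z <= M) -> 0 < M ->
  forall u v, a0 <= u -> u <= v -> v < 1 -> (v - u) / M <= HH v - HH u.
Proof.
  intros HM HM0 u v Hu Huv Hv.
  destruct (Req_dec u v) as [->|n].
  { unfold Rminus. rewrite !Rplus_opp_r. unfold Rdiv; rewrite Rmult_0_l. lra. }
  rewrite HH_diff by lra.
  replace ((v - u) / M) with (RInt (fun _ => / M) u v).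
  2:{ rewrite RInt_const. unfold scal; simpl; unfold mult; simpl. unfold Rdiv. ring. }
  apply RInt_le. lra. apply ex_RInt_const. apply ex_RInt_iG; lra.
  intros z Hz. unfold iG. pose proof (Gp z ltac:(lra)).
  apply Rinv_le_contravar. auto. apply HM; lra.
Qed.

Lemma HH_log y : y0 <= y < 1 -> (ln (1 - y0) - ln (1 - y)) / L <= HH y.
Proof.
  intros Hy. destruct (Req_dec y0 y) as [<-|n].
  { unfold HH. rewrite RInt_point. unfold zero; simpl. unfold Rminus. rewrite Rplus_opp_r. unfold Rdiv; rewrite Rmult_0_l. lra. }
  assert (HI : is_RInt (fun z => / (L * (1 - z))) y0 y (minus (- ln (1 - y) / L) (- ln (1 - y0) / L))).
  { apply (is_RInt_derive (fun z => - ln (1 - z) / L)).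
    - intros z Hz. rewrite Rmin_left, Rmax_right in Hz by lra.
      auto_derive. lra. field. split; lra.
    - intros z Hz. rewrite Rmin_left, Rmax_right in Hz by lra.
      apply (ex_derive_continuous (K:=R_AbsRing) (V:=R_NormedModule)).
      auto_derive. assert (0 < L * (1 - z)) by (apply Rmult_lt_0_compat; lra). lra. }
  unfold minus, plus, opp in HI; simpl in HI.
  replace ((ln (1 - y0) - ln (1 - y)) / L) with (- ln (1 - y) / L + - (- ln (1 - y0) / L)) by (field; lra).
  rewrite <- (is_RInt_unique _ _ _ _ HI).
  unfold HH. apply RInt_le. lra. eexists; exact HI. apply ex_RInt_iG; lra.
  intros z Hz. unfold iG. pose proof (Gp z ltac:(lra)).
  apply Rinv_le_contravar. auto. apply GL; lra.
Qed.

Lemma HH_big t : exists y, y0 <= y < 1 /\ t < HH y.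
Proof.
  set (T := Rmax t 0 + 1).
  set (y := 1 - (1 - y0) * exp (- (L * T))).
  assert (He : 0 < exp (- (L * T))) by apply exp_pos.
  assert (He1 : exp (- (L * T)) < 1).
  { rewrite <- exp_0. apply exp_increasing. assert (0 < T) by (unfold T; pose proof (Rmax_r t 0); lra).
    assert (0 < L * T) by (apply Rmult_lt_0_compat; lra). lra. }
  exists y. split. unfold y; split; nra.
  eapply Rlt_le_trans; [|apply HH_log; unfold y; split; nra].
  replace (1 - y) with ((1 - y0) * exp (- (L * T))) by (unfold y; ring).
  rewrite ln_mult, ln_exp by lra.
  replace ((ln (1 - y0) - (ln (1 - y0) + - (L * T))) / L) with T by (field; lra).
  unfold T. pose proof (Rmax_l t 0). lra.
Qed.


Lemma HH_y0 : HH y0 = 0.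
Proof. unfold HH. rewrite RInt_point. reflexivity. Qed.

Lemma HH_strict u v : a0 <= u -> u < v -> v < 1 -> HH u < HH v.
Proof.
  intros Hu Huv Hv. destruct Mx_ex as [M [HM0 HM]].
  pose proof (HH_lower M HM HM0 u v Hu ltac:(lra) Hv).
  assert (0 < (v - u) / M) by (apply Rdiv_lt_0_compat; lra). lra.
Qed.

Lemma HH_inj u v : a0 <= u < 1 -> a0 <= v < 1 -> HH u = HH v -> u = v.
Proof.
  intros Hu Hv E. destruct (Rtotal_order u v) as [H|[H|H]]; auto.
  - pose proof (HH_strict u v); lra.
  - pose proof (HH_strict v u); lra.
Qed.

Lemma tm_neg : HH a0 < 0.
Proof. rewrite <- HH_y0. apply HH_strict; unfold a0; lra. Qed.

Lemma exists_pre t : HH a0 < t -> exists y, a0 < y < 1 /\ HH y = t.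
Proof.
  intros Ht. destruct (HH_big t) as [yb [Hyb Hyt]].
  destruct (IVT_interv (fun y => HH y - t) a0 yb) as [z [Hz Ez]].
  - intros a Ha. apply continuity_pt_minus. apply HH_cont. lra. apply continuity_pt_const. intros u v; auto.
  - unfold a0; lra.
  - lra.
  - lra.
  - exists z. split; [|lra]. split; [|lra].
    destruct (Req_dec z a0) as [->|n]. lra. lra.
Qed.

Definition Sg (t : R) := epsilon (inhabits 0) (fun y => a0 < y < 1 /\ HH y = t).

Lemma Sg_spec t : HH a0 < t -> a0 < Sg t < 1 /\ HH (Sg t) = t.
Proof. intros Ht. unfold Sg. apply epsilon_spec. apply exists_pre; auto. Qed.

Lemma Sg_0 : Sg 0 = y0.
Proof.
  pose proof (Sg_spec 0 tm_neg) as [H1 H2].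
  apply HH_inj. lra. unfold a0; lra. rewrite H2, HH_y0; reflexivity.
Qed.

Lemma Sg_mono t1 t2 : HH a0 < t1 -> t1 <= t2 -> Sg t1 <= Sg t2.
Proof.
  intros H1 H12. pose proof (Sg_spec t1 H1) as [A1 B1]. pose proof (Sg_spec t2 ltac:(lra)) as [A2 B2].
  apply Rnot_lt_le; intros Hlt.
  pose proof (HH_strict (Sg t2) (Sg t1) ltac:(lra) Hlt ltac:(lra)). lra.
Qed.

Lemma Sg_lip : exists M, 0 < M /\ forall t1 t2, HH a0 < t1 -> t1 <= t2 -> Sg t2 - Sg t1 <= M * (t2 - t1).
Proof.
  destruct Mx_ex as [M [HM0 HM]]. exists M. split; auto.
  intros t1 t2 H1 H12.
  pose proof (Sg_spec t1 H1) as [A1 B1]. pose proof (Sg_spec t2 ltac:(lra)) as [A2 B2].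
  pose proof (Sg_mono t1 t2 H1 H12).
  pose proof (HH_lower M HM HM0 (Sg t1) (Sg t2) ltac:(lra) H ltac:(lra)).
  rewrite B1, B2 in H0.
  apply Rmult_le_reg_r with (/ M). apply Rinv_0_lt_compat; auto.
  replace (M * (t2 - t1) * / M) with (t2 - t1) by (field; lra). exact H0.
Qed.

Lemma Sg_cont t : HH a0 < t -> continuity_pt Sg t.
Proof.
  intros Ht. destruct Sg_lip as [M [HM Hlip]].
  unfold continuity_pt, continue_in, limit1_in, limit_in. intros eps He. simpl.
  exists (Rmin (t - HH a0) (eps / M)). split.
  { apply Rmin_pos. lra. apply Rdiv_lt_0_compat; lra. }
  intros x [_ Hx]. unfold R_dist in *.
  pose proof (Rmin_l (t - HH a0) (eps / M)). pose proof (Rmin_r (t - HH a0) (eps / M)).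
  apply Rabs_def2 in Hx.
  assert (HMe : M * (eps / M) = eps) by (field; lra).
  destruct (Rle_or_lt x t).
  - pose proof (Hlip x t ltac:(lra) H1). pose proof (Sg_mono x t ltac:(lra) H1).
    rewrite Rabs_minus_sym, Rabs_right by lra.
    assert (M * (t - x) < M * (eps / M)) by (apply Rmult_lt_compat_l; lra). lra.
  - pose proof (Hlip t x Ht ltac:(lra)). pose proof (Sg_mono t x Ht ltac:(lra)).
    rewrite Rabs_right by lra.
    assert (M * (x - t) < M * (eps / M)) by (apply Rmult_lt_compat_l; lra). lra.
Qed.

Lemma HH_derivable y : y < 1 -> derivable_pt HH y.
Proof.
  intros Hy. exists (iG y). apply is_derive_Reals. apply HH_deriv; auto.
Qed.

Lemma Sg_deriv t : HH a0 < t -> derivable_pt_lim Sg t (G (Sg t)).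
Proof.
  intros Ht.
  set (lb := (HH a0 + t) / 2). set (ub := t + 1).
  assert (Hlb : HH a0 < lb) by (unfold lb; lra).
  pose proof (Sg_spec ub ltac:(unfold ub; lra)) as [Aub Bub].
  pose proof (Sg_spec t Ht) as [At Bt].
  assert (Prf : forall a : R, Sg lb <= a <= Sg ub -> derivable_pt HH a).
  { intros a Ha. apply HH_derivable. lra. }
  assert (Hincr : Sg lb <= Sg t <= Sg ub).
  { split; apply Sg_mono; unfold lb, ub in *; lra. }
  pose proof (derivable_pt_lim_recip_interv HH Sg lb ub t Prf (Sg_cont t Ht)
     ltac:(unfold lb, ub; lra) ltac:(unfold lb, ub; lra) Hincr) as K.
  assert (Hd : derive_pt HH (Sg t) (Prf (Sg t) Hincr) = iG (Sg t)).
  { apply derive_pt_eq_0. apply is_derive_Reals. apply HH_deriv. lra. }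
  rewrite Hd in K.
  assert (HG : 0 < G (Sg t)) by (apply Gp; lra).
  replace (G (Sg t)) with (1 / iG (Sg t)) by (unfold iG; field; lra).
  apply K.
  - intros x Hx. unfold comp, id. apply Sg_spec. unfold lb in *; lra.
  - unfold iG. apply Rinv_neq_0_compat. lra.
Qed.

Lemma Sg_conv eps : 0 < eps -> exists T, forall t, T < t -> 1 - eps < Sg t /\ Sg t < 1.
Proof.
  intros He.
  destruct (Rlt_or_le (1 - eps / 2) y0) as [Hs|Hs].
  - exists 0. intros t Ht. pose proof (Sg_mono 0 t tm_neg ltac:(lra)). rewrite Sg_0 in H.
    pose proof (Sg_spec t ltac:(pose proof tm_neg; lra)). lra.
  - set (ys := 1 - eps / 2).
    exists (HH ys). intros t Ht.
    assert (HH a0 < HH ys) by (apply HH_strict; unfold a0, ys in *; lra).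
    pose proof (Sg_spec (HH ys) H) as [A1 B1].
    assert (Sg (HH ys) = ys) by (apply HH_inj; unfold ys, a0 in *; try lra; auto).
    pose proof (Sg_mono (HH ys) t H ltac:(lra)).
    pose proof (Sg_spec t ltac:(lra)). unfold ys in *. lra.
Qed.

End Gen.

Lemma gen_exist (G : R -> R) (y0 L : R) :
  (forall z, continuity_pt G z) -> (forall z, z < 1 -> 0 < G z) -> 0 < L -> y0 < 1 ->
  (forall z, y0 <= z <= 1 -> G z <= L * (1 - z)) ->
  exists (S : R -> R) (tm : R), tm < 0 /\ S 0 = y0 /\
   (forall t, tm < t -> derivable_pt_lim S t (G (S t)) /\ S t < 1) /\
   (forall t, 0 <= t -> y0 <= S t) /\
   (forall eps, 0 < eps -> exists T, forall t, T < t -> 1 - eps < S t).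
Proof.
  intros Gc Gp HL Hy0 GL.
  exists (Sg G y0), (HH G y0 (a0 y0)).
  pose proof (tm_neg G y0 Gc Gp Hy0) as Htm.
  split; auto. split. apply (Sg_0 G y0 L); auto.
  split. { intros t Ht. split. apply (Sg_deriv G y0 L); auto. apply (Sg_spec G y0 L); auto. }
  split. { intros t Ht. rewrite <- (Sg_0 G y0 L) at 1 by auto. apply (Sg_mono G y0 L); auto. }
  intros eps He. destruct (Sg_conv G y0 L Gc Gp HL Hy0 GL eps He) as [T HT].
  exists T. intros t Ht. apply HT; auto.
Qed.

Lemma right_bound l S0 S : is_solution l S0 S ->
  exists d, 0 < d /\ forall h, 0 < h < d -> Rabs (S h - S0) <= h * (Rabs (A_ l S0) + 1).
Proof.
  intros [H0 [_ [_ Hlim]]]. rewrite H0 in Hlim.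
  assert (HP : locally (A_ l S0) (fun y => Rabs (y - A_ l S0) < 1)).
  { exists (mkposreal 1 Rlt_0_1). intros y Hy. exact Hy. }
  destruct (Hlim _ HP) as [d Hd].
  exists d. split. apply cond_pos.
  intros h Hh. assert (Hb : ball 0 d h).
  { unfold ball; simpl; unfold AbsRing_ball, abs, minus, plus, opp; simpl.
    rewrite Ropp_0, Rplus_0_r, Rabs_right; lra. }
  specialize (Hd h Hb ltac:(lra)). simpl in Hd.
  replace (S h - S0) with (h * ((S h - S0) / h)) by (field; lra).
  rewrite Rabs_mult, Rabs_right by lra.
  apply Rmult_le_compat_l. lra.
  pose proof (Rabs_triang_inv ((S h - S0) / h) (A_ l S0)). lra.
Qed.

Lemma sol_cont l S0 S : is_solution l S0 S -> forall s, 0 < s -> continuity_pt S s.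
Proof.
  intros [_ [_ [Hd _]]] s Hs. apply continuity_pt_filterlim.
  apply (ex_derive_continuous (K:=R_AbsRing) (V:=R_NormedModule)).
  eexists; apply Hd; auto.
Qed.

Lemma sol_bound l S0 S : is_solution l S0 S -> forall t, 0 < t -> exists B, forall s, 0 <= s <= t -> S s <= B.
Proof.
  intros Hsol t Ht.
  destruct (right_bound l S0 S Hsol) as [d [Hd Hb]].
  set (e := Rmin d t / 2).
  assert (He : 0 < e) by (unfold e; pose proof (Rmin_pos d t Hd Ht); lra).
  assert (He2 : e < d /\ e < t) by (unfold e; pose proof (Rmin_l d t); pose proof (Rmin_r d t); lra).
  destruct (continuity_ab_maj S e t) as [Mx [HM HMx]]. lra.
  { intros c Hc. apply (sol_cont l S0 S Hsol). lra. }
  exists (Rmax (S Mx) (S0 + t * (Rabs (A_ l S0) + 1))).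
  intros s Hs.
  destruct Hsol as [H0 _].
  destruct (Rle_or_lt e s).
  - apply Rle_trans with (S Mx). apply HM; lra. apply Rmax_l.
  - eapply Rle_trans; [|apply Rmax_r].
    destruct (Req_dec s 0) as [->|n].
    + rewrite H0. pose proof (Rabs_pos (A_ l S0)). nra.
    + pose proof (Hb s ltac:(lra)).
      assert (S s - S0 <= s * (Rabs (A_ l S0) + 1)) by (eapply Rle_trans; [apply RRle_abs|exact H1]).
      pose proof (Rabs_pos (A_ l S0)). nra.
Qed.

Lemma uniq l (hl : 0 < l) S0 S1 S2 : is_solution l S0 S1 -> is_solution l S0 S2 ->
  forall t, 0 <= t -> S1 t = S2 t.
Proof.
  intros H1 H2 t Ht.
  destruct (Req_dec t 0) as [->|Ht0]. { rewrite (proj1 H1), (proj1 H2). reflexivity. }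
  assert (Htp : 0 < t) by lra.
  destruct (sol_bound l S0 S1 H1 t Htp) as [B1 HB1].
  destruct (sol_bound l S0 S2 H2 t Htp) as [B2 HB2].
  set (K := Rmax (Rmax B1 B2) 1).
  assert (HK : 0 < K) by (unfold K; pose proof (Rmax_r (Rmax B1 B2) 1); lra).
  destruct (A_lip l hl K HK) as [L [HL Hlip]].
  set (C := Rabs (A_ l S0) + 1).
  assert (HC : 0 < C) by (unfold C; pose proof (Rabs_pos (A_ l S0)); lra).
  destruct (right_bound l S0 S1 H1) as [d1 [Hd1 Hr1]].
  destruct (right_bound l S0 S2 H2) as [d2 [Hd2 Hr2]].
  destruct H1 as [E1 [P1 [D1 _]]]. destruct H2 as [E2 [P2 [D2 _]]].
  set (w := fun s => (S1 s - S2 s) ^ 2 * exp (- (2 * L * s))).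
  set (dw := fun s => 2 * (S1 s - S2 s) * (A_ l (S1 s) - A_ l (S2 s)) * exp (- (2 * L * s))
      + (S1 s - S2 s) ^ 2 * (- (2 * L)) * exp (- (2 * L * s))).
  assert (Hwd : forall s, 0 < s -> is_derive w s (dw s)).
  { intros s Hs. unfold w, dw.
    auto_derive.
    - repeat split; eexists; [apply D1|apply D2]; auto.
    - replace (Derive (fun x => S1 x) s) with (A_ l (S1 s)) by (symmetry; apply is_derive_unique; apply D1; auto).
      replace (Derive (fun x => S2 x) s) with (A_ l (S2 s)) by (symmetry; apply is_derive_unique; apply D2; auto).
      match goal with |- @eq _ ?a ?b => change (@eq R a b) end; ring. }
  assert (Hwn : forall s, 0 < s <= t -> dw s <= 0).
  { intros s Hs. unfold dw.
    assert (Hk1 : S1 s <= K) by (unfold K; pose proof (HB1 s ltac:(lra)); pose proof (Rmax_l B1 B2);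
      pose proof (Rmax_l (Rmax B1 B2) 1); lra).
    assert (Hk2 : S2 s <= K) by (unfold K; pose proof (HB2 s ltac:(lra)); pose proof (Rmax_r B1 B2);
      pose proof (Rmax_l (Rmax B1 B2) 1); lra).
    pose proof (Hlip (S1 s) (S2 s) Hk1 Hk2) as Hl.
    set (u := S1 s - S2 s) in *. set (v := A_ l (S1 s) - A_ l (S2 s)) in *.
    assert (Huv : u * v <= L * u ^ 2).
    { apply Rle_trans with (Rabs u * Rabs v). rewrite <- Rabs_mult. apply RRle_abs.
      apply Rle_trans with (Rabs u * (L * Rabs u)). apply Rmult_le_compat_l. apply Rabs_pos. auto.
      right. replace (u ^ 2) with (Rabs u * Rabs u). ring.
      rewrite <- Rabs_mult. simpl. rewrite Rmult_1_r. apply Rabs_right. apply Rle_ge, Rle_0_sqr. }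
    pose proof (exp_pos (- (2 * L * s))). nra. }
  assert (Hmono : forall e, 0 < e < t -> w t <= w e).
  { intros e He. destruct (MVT_gen w e t dw) as [c [Hc Ec]].
    - intros x Hx. rewrite Rmin_left, Rmax_right in Hx by lra. apply Hwd; lra.
    - intros x Hx. rewrite Rmin_left, Rmax_right in Hx by lra.
      apply continuity_pt_filterlim. apply (ex_derive_continuous (K:=R_AbsRing) (V:=R_NormedModule)).
      eexists; apply Hwd; lra.
    - rewrite Rmin_left, Rmax_right in Hc by lra.
      pose proof (Hwn c ltac:(lra)). nra. }
  assert (Hsmall : forall e, 0 < e -> e < d1 -> e < d2 -> w e <= 4 * C ^ 2 * e ^ 2).
  { intros e He Hd1' Hd2'. unfold w.
    pose proof (Hr1 e ltac:(lra)). pose proof (Hr2 e ltac:(lra)). fold C in H, H0.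
    assert (Habs : Rabs (S1 e - S2 e) <= 2 * C * e).
    { replace (S1 e - S2 e) with ((S1 e - S0) - (S2 e - S0)) by ring.
      eapply Rle_trans. apply Rabs_triang. rewrite Rabs_Ropp. lra. }
    assert (Hex : exp (- (2 * L * e)) <= 1).
    { apply Rle_trans with (exp 0). apply exp_le. assert (0 <= 2 * L * e) by (apply Rmult_le_pos; lra). lra.
      rewrite exp_0; lra. }
    assert (Hsq : (S1 e - S2 e) ^ 2 <= (2 * C * e) ^ 2).
    { replace ((S1 e - S2 e) ^ 2) with (Rabs (S1 e - S2 e) ^ 2).
      apply pow_incr. split. apply Rabs_pos. auto.
      simpl. rewrite !Rmult_1_r. rewrite <- Rabs_mult. apply Rabs_right. apply Rle_ge, Rle_0_sqr. }
    pose proof (exp_pos (- (2 * L * e))).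
    assert (0 <= (S1 e - S2 e) ^ 2) by (apply pow2_ge_0).
    apply Rle_trans with ((S1 e - S2 e) ^ 2). nra. nra. }
  assert (Hw0 : 0 <= w t) by (unfold w; pose proof (exp_pos (- (2 * L * t))); pose proof (pow2_ge_0 (S1 t - S2 t)); nra).
  assert (Hwt : w t = 0).
  { destruct Hw0 as [Hpos|]; auto. exfalso.
    set (X := w t) in *.
    set (e := Rmin (Rmin (Rmin d1 d2) t / 2) (Rmin 1 (X / (4 * C ^ 2 + 1)))).
    assert (HC2 : 0 < 4 * C ^ 2 + 1) by (pose proof (pow2_ge_0 C); lra).
    assert (Hx1 : 0 < X / (4 * C ^ 2 + 1)) by (apply Rdiv_lt_0_compat; lra).
    pose proof (Rmin_pos d1 d2 Hd1 Hd2).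
    pose proof (Rmin_pos (Rmin d1 d2) t H Htp).
    assert (He0 : 0 < e) by (unfold e; apply Rmin_pos; [lra|apply Rmin_pos; lra]).
    pose proof (Rmin_l (Rmin (Rmin d1 d2) t / 2) (Rmin 1 (X / (4 * C ^ 2 + 1)))).
    pose proof (Rmin_r (Rmin (Rmin d1 d2) t / 2) (Rmin 1 (X / (4 * C ^ 2 + 1)))).
    pose proof (Rmin_l 1 (X / (4 * C ^ 2 + 1))). pose proof (Rmin_r 1 (X / (4 * C ^ 2 + 1))).
    pose proof (Rmin_l (Rmin d1 d2) t). pose proof (Rmin_r (Rmin d1 d2) t).
    pose proof (Rmin_l d1 d2). pose proof (Rmin_r d1 d2).
    fold e in H1, H2.
    pose proof (Hmono e ltac:(lra)). pose proof (Hsmall e He0 ltac:(lra) ltac:(lra)).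
    assert (4 * C ^ 2 * e ^ 2 <= 4 * C ^ 2 * e).
    { pose proof (pow2_ge_0 C). apply Rmult_le_compat_l. lra. simpl. rewrite Rmult_1_r. nra. }
    assert (4 * C ^ 2 * e <= 4 * C ^ 2 * (X / (4 * C ^ 2 + 1))).
    { pose proof (pow2_ge_0 C). apply Rmult_le_compat_l; lra. }
    assert (4 * C ^ 2 * (X / (4 * C ^ 2 + 1)) < X).
    { apply Rmult_lt_reg_r with (4 * C ^ 2 + 1). lra.
      replace (4 * C ^ 2 * (X / (4 * C ^ 2 + 1)) * (4 * C ^ 2 + 1)) with (4 * C ^ 2 * X) by (field; lra).
      nra. }
    lra. }
  unfold w in Hwt. pose proof (exp_pos (- (2 * L * t))).
  apply Rmult_integral in Hwt. destruct Hwt as [Hz|Hz]; [|lra].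
  destruct (Req_dec (S1 t - S2 t) 0) as [Hq|Hq]. lra. exfalso; exact (pow_nonzero _ 2 Hq Hz).
Qed.

Lemma assemble l (hl : 0 < l) S0 (hS0 : 0 <= S0) (S : R -> R) tm :
  tm < 0 -> S 0 = S0 ->
  (forall t, tm < t -> derivable_pt_lim S t (A_ l (S t))) ->
  (forall t, 0 <= t -> 0 <= S t <= Rmax S0 1) ->
  (forall eps, 0 < eps -> exists T, forall t, T < t -> Rabs (S t - 1) < eps) ->
  exists S : R -> R,
    is_solution l S0 S /\
    (forall S' : R -> R, is_solution l S0 S' -> forall t, 0 <= t -> S' t = S t) /\
    (exists M : R, forall t, 0 <= t -> Rabs (S t) <= M) /\
    (forall t, 0 < t -> continuous (Derive S) t) /\
    filterlim (Derive S) (at_right 0) (locally (A_ l S0)) /\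
    is_lim S p_infty 1 /\
    (forall t, 0 <= t -> 0 <= S t <= Rmax S0 1).
Proof.
  intros Htm H0 Hd Hb Hc.
  assert (Hd' : forall t, tm < t -> is_derive S t (A_ l (S t))) by (intros; apply is_derive_Reals; auto).
  assert (HD : forall t, tm < t -> Derive S t = A_ l (S t)) by (intros; apply is_derive_unique; auto).
  assert (HcD : forall t, tm < t -> continuous (Derive S) t).
  { intros t Ht. apply continuous_ext_loc with (fun y => A_ l (S y)).
    - exists (mkposreal (t - tm) ltac:(lra)). intros y Hy. simpl in Hy.
      unfold ball in Hy; simpl in Hy; unfold AbsRing_ball, abs, minus, plus, opp in Hy; simpl in Hy.
      apply Rabs_def2 in Hy. symmetry. apply HD. lra.
    - apply (continuous_comp S (A_ l)).
      + apply (ex_derive_continuous (K:=R_AbsRing) (V:=R_NormedModule)). eexists; apply Hd'; auto.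
      + apply continuity_pt_filterlim. apply A_cont; auto. }
  assert (Hsol : is_solution l S0 S).
  { split; auto. split. intros; apply Hb; auto. split. intros; apply Hd'; lra.
    intros P [eps HP].
    destruct (Hd 0 Htm eps (cond_pos eps)) as [del Hdel].
    exists del. intros y Hy Hpos. apply HP.
    unfold ball; simpl; unfold AbsRing_ball, abs, minus, plus, opp; simpl.
    unfold ball in Hy; simpl in Hy; unfold AbsRing_ball, abs, minus, plus, opp in Hy; simpl in Hy.
    rewrite Ropp_0, Rplus_0_r in Hy.
    specialize (Hdel y ltac:(lra) Hy). rewrite Rplus_0_l in Hdel. exact Hdel. }
  exists S. split; [exact Hsol|]. split.
  { intros S' H' t Ht. apply (uniq l hl S0 S' S H' Hsol t Ht). }
  split.
  { exists (Rmax S0 1). intros t Ht. pose proof (Hb t Ht). rewrite Rabs_right; lra. }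
  split. { intros t Ht. apply HcD. lra. }
  split.
  { intros P HP. pose proof (HcD 0 Htm) as Hc0. change (filterlim (Derive S) (locally 0) (locally (Derive S 0))) in Hc0. rewrite (HD 0 Htm), H0 in Hc0.
    destruct (Hc0 P HP) as [e He]. exists e. intros y Hy _. apply He. exact Hy. }
  split.
  { apply is_lim_spec. intros eps. destruct (Hc eps (cond_pos eps)) as [T HT].
    exists T. intros x Hx. apply HT; auto. }
  exact Hb.
Qed.

Theorem theorem4p1 (l : R) (hl : 0 < l) (S0 : R) (hS0 : 0 <= S0) :
  exists S : R -> R,
    is_solution l S0 S /\
    (forall S' : R -> R, is_solution l S0 S' -> forall t, 0 <= t -> S' t = S t) /\
    (exists M : R, forall t, 0 <= t -> Rabs (S t) <= M) /\
    (forall t, 0 < t -> continuous (Derive S) t) /\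
    filterlim (Derive S) (at_right 0) (locally (A_ l S0)) /\
    is_lim S p_infty 1 /\
    (forall t, 0 <= t -> 0 <= S t <= Rmax S0 1).
Proof.
  destruct (Rtotal_order S0 1) as [Hlt|[Heq|Hgt]].
  - destruct (A_lip l hl 1 Rlt_0_1) as [L [HL Hlip]].
    destruct (gen_exist (A_ l) S0 L (A_cont l hl) (A_pos_lt1 l hl) HL Hlt) as [S [tm [Htm [H0 [Hd [Hge Hconv]]]]]].
    { intros z Hz. rewrite <- (Rminus_0_r (A_ l z)), <- (A_one l).
      pose proof (Hlip z 1 ltac:(lra) ltac:(lra)).
      assert (Rabs (z - 1) = 1 - z) by (rewrite Rabs_left1; lra).
      pose proof (Rle_abs (A_ l z - A_ l 1)). nra. }
    apply (assemble l hl S0 hS0 S tm Htm H0).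
    + intros t Ht. apply Hd; auto.
    + intros t Ht. pose proof (Hge t Ht). pose proof (Hd t ltac:(lra)) as [_ Hlt1].
      pose proof (Rmax_r S0 1). lra.
    + intros eps He. destruct (Hconv eps He) as [T HT]. exists (Rmax T 0). intros t Ht.
      pose proof (Rmax_l T 0). pose proof (Rmax_r T 0).
      pose proof (HT t ltac:(lra)). pose proof (Hd t ltac:(lra)) as [_ Hlt1].
      rewrite Rabs_left by lra. lra.
  - subst S0. apply (assemble l hl 1 ltac:(lra) (fun _ => 1) (-1)); auto; try lra.
    + intros t _. rewrite A_one. apply derivable_pt_lim_const.
    + intros t _. pose proof (Rmax_r 1 1). lra.
    + intros eps He. exists 0. intros. unfold Rminus. rewrite Rplus_opp_r, Rabs_R0. lra.
  - destruct (A_lip l hl S0 ltac:(lra)) as [L [HL Hlip]].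
    set (G := fun z => - A_ l (2 - z)).
    assert (Gc : forall z, continuity_pt G z).
    { intros z. unfold G. apply (continuity_pt_opp (fun z => A_ l (2 - z))).
      change (continuity_pt (comp (A_ l) (fun z => 2 - z)) z).
      apply continuity_pt_comp. apply continuity_pt_minus. apply continuity_pt_const. intros u v; auto.
      apply continuity_pt_id. apply A_cont; auto. }
    assert (Gp : forall z, z < 1 -> 0 < G z).
    { intros z Hz. unfold G. pose proof (A_neg_gt1 l hl (2 - z) ltac:(lra)). lra. }
    destruct (gen_exist G (2 - S0) L Gc Gp HL ltac:(lra)) as [S [tm [Htm [H0 [Hd [Hge Hconv]]]]]].
    { intros z Hz. unfold G.
      pose proof (Hlip 1 (2 - z) ltac:(lra) ltac:(lra)). rewrite A_one in H.
      pose proof (Rle_abs (0 - A_ l (2 - z))).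
      assert (Rabs (1 - (2 - z)) = 1 - z) by (rewrite Rabs_left1; lra). nra. }
    apply (assemble l hl S0 hS0 (fun t => 2 - S t) tm Htm).
    + simpl. rewrite H0. ring.
    + intros t Ht. destruct (Hd t Ht) as [K _].
      pose proof (derivable_pt_lim_minus (fct_cte 2) S t 0 _ (derivable_pt_lim_const 2 t) K) as K2.
      unfold G in K2. replace (A_ l (2 - S t)) with (0 - - A_ l (2 - S t)) by ring. exact K2.
    + intros t Ht. pose proof (Hge t Ht). pose proof (Hd t ltac:(lra)) as [_ Hlt1].
      pose proof (Rmax_l S0 1). lra.
    + intros eps He. destruct (Hconv eps He) as [T HT]. exists (Rmax T 0). intros t Ht.
      pose proof (Rmax_l T 0). pose proof (Rmax_r T 0).
      pose proof (HT t ltac:(lra)). pose proof (Hd t ltac:(lra)) as [_ Hlt1].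
      rewrite Rabs_right by lra. lra.
Qed.
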